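(* Let $\mathbb K$ be a field with $\operatorname{char}(\mathbb K)=0$, let $n\ge2$, and let $\mathcal G_n$, $\mathcal N_{0,n}$ and $U_m(z_g)$ be as in the context. Suppose $f\in A_{\mathbb K}(\mathcal G_n)$ has the form $$f=\sum_{g\in\mathcal N_{0,n}}c_g1_{U_m(z_g)}\qquad\text{for some }c_g\in\mathbb K\text{ and }m\in\mathbb N.$$ Then $f$ belongs to the ideal $S_{\mathbb K}(\mathcal G_n)$ of singular functions if and only if $f$ is the zero function.
   Context: Let $X=\{\mathbf 0,\mathbf 1\}$, $X^*$ the finite words (with empty word $\varnothing$), $X^\omega$ the infinite words, $C(\eta)=\{\eta w:w\in X^\omega\}$, $\mathbf 1^m$ and $\mathbf 1^\infty$ the finite/infinite words of ones. Fix $n\ge2$, a primitive polynomial $f_n$ of degree $n$ over $\mathbb F_2$ with root $\alpha$, and $\operatorname{Tr}(\beta)=\beta+\beta^2+\dots+\beta^{2^{n-1}}\in\mathbb F_2$. $\mathfrak G_n$ is the group of automorphisms of the binary rooted tree $X^*$ generated by $a$ ($a\cdot(\mathbf 0w)=\mathbf 1w$, $a\cdot(\mathbf 1w)=\mathbf 0w$) and $\iota_n(\beta)$, $\beta\in\mathbb F_{2^n}$, where $\iota_n(\beta)\cdot(\mathbf 0w)=\mathbf 0(a^{\operatorname{Tr}(\beta)}\cdot w)$, $\iota_n(\beta)\cdot(\mathbf 1w)=\mathbf 1(\iota_n(\alpha\beta)\cdot w)$; restrictions $g|_x$ are given by $g\cdot(xw)=(g\cdot x)(g|_x\cdot w)$.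 $\mathcal N_{0,n}=\iota_n(\mathbb F_{2^n})$, $e=\iota_n(0)$. $\mathcal G_n$ is the groupoid of germs of the action of the inverse semigroup $\{(\eta,g,\mu)\}\cup\{0\}$ on $X^\omega$ with $(\eta,g,\mu):C(\mu)\to C(\eta)$, $\mu w\mapsto\eta(g\cdot w)$; germs $[(\eta,g,\mu),w]$, $w\in C(\mu)$, with $[(\eta,g,\mu),w]=[(\eta',g',\mu'),w']$ iff $w=w'$ and some finite prefix $\nu=\mu\epsilon=\mu'\epsilon'$ of $w$ satisfies $\eta(g\cdot\epsilon)=\eta'(g'\cdot\epsilon')$ and $g|_\epsilon=g'|_{\epsilon'}$; basic open bisections $\Theta(s,U)=\{[s,w]:w\in U\}$. It is a second countable ample groupoid with Hausdorff unit space $X^\omega$. For $g\in\mathfrak G_n$, $z_g=[(\varnothing,g,\varnothing),\mathbf 1^\infty]$ and $U_m(z_g)=\Theta((\varnothing,g,\varnothing),C(\mathbf 1^m))$. $A_{\mathbb K}(\mathcal G_n)$ is the Steinberg algebra: the $\mathbb K$-span of characteristic functions of compact open bisections, with convolution. A function $f\in A_{\mathbb K}(\mathcal G_n)$ is singular if $f=\sum_{i=1}^N c_i1_{S_i}$ where each $S_i$ is a relatively closed subset of some open bisection and has empty interior; equivalently, $\operatorname{supp}(f)=\{x:f(x)\neq0\}$ has empty interior. The singular functions form an ideal $S_{\mathbb K}(\mathcal G_n)$. *)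

(* Defs.v *)
From HB Require Import structures.
From mathcomp Require Import all_boot all_order all_algebra all_field.
From mathcomp Require Import boolp.
Set Implicit Arguments. Unset Strict Implicit. Unset Printing Implicit Defensive.
Import GRing.Theory.
Local Open Scope ring_scope.

(* Finite words over X = {0,1}: 0 = false, 1 = true.  Infinite words: nat -> bool. *)

Section Defs.
Variables (F : finFieldType) (n : nat) (alpha : F).

Definition Tr (beta : F) : F := \sum_(i < n) beta ^+ (2 ^ i)%N.

Definition act_a (w : seq bool) : seq bool :=
  match w with [::] => [::] | x :: w' => ~~ x :: w' end.

Fixpoint act_iota (beta : F) (w : seq bool) : seq bool :=
  match w with
  | [::] => [::]
  | false :: w' => false :: (if Tr beta == 1 then act_a w' else w')
  | true :: w' => true :: act_iota (alpha * beta) w'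
  end.

(* generators of G_n: None = a, Some beta = iota_n(beta).
   All generators are involutions, so G_n consists of the finite products
   of generators; an element is represented by a word of generators,
   [:: s1; ...; sk] acting as s1 (s2 (... (sk w))). *)
Definition gen := option F.
Definition act_gen (s : gen) (w : seq bool) : seq bool :=
  match s with None => act_a w | Some beta => act_iota beta w end.
Definition gword := seq gen.
Definition act (g : gword) (w : seq bool) : seq bool := foldr act_gen w g.

Definition restr (g : gword) (eps : seq bool) (u : seq bool) : seq bool :=
  drop (size eps) (act g (eps ++ u)).

Definition in_cyl (mu : seq bool) (w : nat -> bool) : Prop :=
  forall i, (i < size mu)%N -> w i = nth false mu i.

Definition pre (w : nat -> bool) (k : nat) : seq bool := mkseq w k.

(* representatives ((eta, g, mu), w) of germs [(eta,g,mu), w] *)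
Definition grep := (seq bool * gword * seq bool * (nat -> bool))%type.
Definition valid (x : grep) : Prop := let: (_, _, mu, w) := x in in_cyl mu w.

Definition germ_eq (x y : grep) : Prop :=
  let: (eta, g, mu, w) := x in
  let: (eta', g', mu', w') := y in
  (forall i, w i = w' i) /\
  exists k, [/\ (size mu <= k)%N, (size mu' <= k)%N,
    eta ++ act g (drop (size mu) (pre w k))
      = eta' ++ act g' (drop (size mu') (pre w k))
    & forall u, restr g (drop (size mu) (pre w k)) u
                = restr g' (drop (size mu') (pre w k)) u].

Definition gset := grep -> Prop.

Definition cantor_open (U : (nat -> bool) -> Prop) : Prop :=
  forall w, U w -> exists k, forall w', (forall i, (i < k)%N -> w' i = w i) -> U w'.

Definition Theta (eta : seq bool) (g : gword) (mu : seq bool)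
  (U : (nat -> bool) -> Prop) : gset :=
  fun x => exists w, [/\ U w, in_cyl mu w & germ_eq x (eta, g, mu, w)].

(* open subsets of the groupoid: sets of germs (invariant under germ equality)
   which are unions of basic open bisections Theta(s, U), U open in C(mu) *)
Definition gopen (A : gset) : Prop :=
  (forall x y, valid x -> valid y -> germ_eq x y -> A x -> A y) /\
  forall x, valid x -> A x ->
    exists eta g mu U, [/\ cantor_open U, (forall w, U w -> in_cyl mu w),
      Theta eta g mu U x & forall y, valid y -> Theta eta g mu U y -> A y].

Definition support (K : fieldType) (f : grep -> K) : gset :=
  fun x => valid x /\ f x != 0.

(* singular: supp(f) has empty interior, i.e. every open set of germs
   contained in supp(f) is empty *)
Definition singular (K : fieldType) (f : grep -> K) : Prop :=
  forall A, gopen A -> (forall x, valid x -> A x -> support f x) ->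
    forall x, valid x -> ~ A x.

(* U_m(z_g) = Theta((empty, g, empty), C(1^m)) for g = iota_n(beta) *)
Definition ones_cyl (m : nat) : (nat -> bool) -> Prop :=
  fun w => forall i, (i < m)%N -> w i = true.
Definition U_iota (m : nat) (beta : F) : gset :=
  Theta [::] [:: Some beta] [::] (ones_cyl m).

(* f = sum_{g in N_{0,n}} c_g 1_{U_m(z_g)}, indexed by beta (iota_n is injective) *)
Definition fsum (K : fieldType) (c : F -> K) (m : nat) (x : grep) : K :=
  \sum_(beta : F) c beta * (if `[< U_iota m beta x >] then 1 else 0).

End Defs.

(* Main.v *)
Require Import Defs.
From HB Require Import structures.
From mathcomp Require Import all_boot all_order all_algebra all_field.
From mathcomp Require Import boolp.
From mathcomp Require Import zify ring.
Set Implicit Arguments. Unset Strict Implicit. Unset Printing Implicit Defensive.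
Import GRing.Theory.
Local Open Scope ring_scope.

Section Seqs.
Variables (F : finFieldType) (n : nat) (alpha : F).

Lemma size_act_a w : size (act_a w) = size w.
Proof. by case: w. Qed.

Lemma size_act_iota b w : size (act_iota n alpha b w) = size w.
Proof.
elim: w b => [|[] w IH] b //=; first by rewrite IH.
by case: ifP => _ //=; rewrite size_act_a.
Qed.

Lemma size_act g w : size (act n alpha g w) = size w.
Proof.
elim: g => [|[s|] g IH] //=; by rewrite ?size_act_iota ?size_act_a IH.
Qed.

Lemma act_a_cat p r : exists r', act_a (p ++ r) = act_a p ++ r'.
Proof. case: p => [|x p] /=; first by exists (act_a r). by exists r. Qed.

Lemma act_iota_cat b p r : exists r', act_iota n alpha b (p ++ r) = act_iota n alpha b p ++ r'.
Proof.
elim: p b => [|[] p IH] b /=; first by exists (act_iota n alpha b r).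
  by have [r' ->] := IH (alpha * b); exists r'.
case: ifP => _; last by exists r.
by have [r' ->] := act_a_cat p r; exists r'.
Qed.

Lemma act_cat_ex g p r : exists r', act n alpha g (p ++ r) = act n alpha g p ++ r'.
Proof.
elim: g => [|s g [r1 IH]]; first by exists r.
change (exists r', act_gen n alpha s (act n alpha g (p++r)) = act_gen n alpha s (act n alpha g p) ++ r').
rewrite IH.
case: s => [b|]; [exact: act_iota_cat | exact: act_a_cat].
Qed.

Lemma act_cat g p r : act n alpha g (p ++ r) = act n alpha g p ++ restr n alpha g p r.
Proof.
have [r' E] := act_cat_ex g p r.
by rewrite /restr E drop_size_cat // size_act.
Qed.

Lemma restr_cat g d r u :
  restr n alpha g (d ++ r) u = drop (size r) (restr n alpha g d (r ++ u)).
Proof.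
rewrite /restr -catA act_cat drop_drop size_cat addnC -drop_drop.
by rewrite drop_size_cat // size_act.
Qed.

Lemma drop_cat_le (T : Type) k (s1 s2 : seq T) : (k <= size s1)%N -> drop k (s1 ++ s2) = drop k s1 ++ s2.
Proof. elim: s1 k => [|x s1 IH] k; first by case: k => [|k] //=; rewrite drop0.
by case: k => [|k] //= h; rewrite IH. Qed.

Lemma pre_ext w w' k : (forall i, w i = w' i) -> pre w k = pre w' k.
Proof. by move=> h; apply: eq_mkseq. Qed.

Lemma pre_split w k k' : (k <= k')%N -> pre w k' = pre w k ++ drop k (pre w k').
Proof.
move=> h; rewrite -{1}(cat_take_drop k (pre w k')); congr (_ ++ _).
by rewrite /pre /mkseq -map_take take_iota (minn_idPl h).
Qed.

Lemma size_pre w k : size (pre w k) = k.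
Proof. by rewrite size_mkseq. Qed.

End Seqs.
Section Germs.
Variables (F : finFieldType) (n : nat) (alpha : F).
Local Notation act := (act n alpha).
Local Notation restr := (restr n alpha).

Definition gcond (eta : seq bool) (g : gword F) (mu : seq bool) (eta' : seq bool) (g' : gword F) (mu' : seq bool) w k :=
  [/\ (size mu <= k)%N, (size mu' <= k)%N,
    eta ++ act g (drop (size mu) (pre w k))
      = eta' ++ act g' (drop (size mu') (pre w k))
    & forall u, restr g (drop (size mu) (pre w k)) u
                = restr g' (drop (size mu') (pre w k)) u].

Lemma gcond_mono eta g mu eta' g' mu' w k k' : (k <= k')%N ->
  gcond eta g mu eta' g' mu' w k -> gcond eta g mu eta' g' mu' w k'.
Proof.
move=> kk [h1 h2 h3 h4]; rewrite /gcond (pre_split w kk).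
set r := drop k _.
rewrite !drop_cat_le ?size_pre //.
split; [exact: leq_trans h1 kk | exact: leq_trans h2 kk | |].
  by rewrite !act_cat catA h3 h4 -catA.
by move=> u; rewrite !restr_cat h4.
Qed.

Lemma germ_eqE eta g mu w eta' g' mu' w' :
  germ_eq n alpha (eta, g, mu, w) (eta', g', mu', w') <->
  (forall i, w i = w' i) /\ exists k, gcond eta g mu eta' g' mu' w k.
Proof. by []. Qed.

Lemma germ_refl x : germ_eq n alpha x x.
Proof.
case: x => [[[eta g] mu] w]; apply/germ_eqE; split => //.
by exists (size mu); split.
Qed.

Lemma germ_sym x y : germ_eq n alpha x y -> germ_eq n alpha y x.
Proof.
case: x => [[[eta g] mu] w]; case: y => [[[eta' g'] mu'] w'].
move/germ_eqE => [hw [k [h1 h2 h3 h4]]]; apply/germ_eqE; split; first by move=> i; rewrite hw.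
exists k; rewrite /gcond -(pre_ext k hw); split => // u; by rewrite h4.
Qed.

Lemma germ_trans x y z : germ_eq n alpha x y -> germ_eq n alpha y z -> germ_eq n alpha x z.
Proof.
case: x => [[[eta g] mu] w]; case: y => [[[eta' g'] mu'] w'].
case: z => [[[eta'' g''] mu''] w''].
move/germ_eqE => [hw [k1 c1]] /germ_eqE [hw' [k2 c2]]; apply/germ_eqE.
split => [i|]; first by rewrite hw hw'.
have hww : forall i, w' i = w i by move=> i; rewrite hw.
exists (maxn k1 k2).
have [a1 a2 a3 a4] := gcond_mono (leq_maxl k1 k2) c1.
have [b1 b2 b3 b4] := gcond_mono (leq_maxr k1 k2) c2.
move: b3 b4; rewrite (pre_ext _ hww) => b3 b4.
split => //; first by rewrite a3 b3.
by move=> u; rewrite a4 b4.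
Qed.

End Germs.
Section Ones.
Variables (F : finFieldType) (n : nat) (alpha : F).

Definition Vk k (w : nat -> bool) := forall i, (i <= k)%N -> w i = (i < k)%N.

Lemma pre_V k w j : Vk k w ->
  pre w (k.+1 + j) = nseq k true ++ false :: mkseq (fun i => w (k.+1 + i)) j.
Proof.
move=> hV; rewrite /pre /mkseq iotaD map_cat.
have -> : iota (0 + k.+1) j = map (addn k.+1) (iota 0 j) by rewrite add0n -(iotaDl k.+1 0) addn0.
rewrite -map_comp.
rewrite -addn1 iotaD map_cat add0n /= -cat_rcons -cats1 -catA /=.
rewrite hV // ltnn addn1 -catA /=; congr (_ ++ _).
apply: (@eq_from_nth _ false); first by rewrite size_map size_iota size_nseq.
move=> i; rewrite size_map size_iota => hi.
by rewrite (nth_map 0%N) ?size_iota // nth_iota // nth_nseq hi add0n hV // ltnW.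
Qed.

Lemma act_iota_ones k b r :
  act_iota n alpha b (nseq k true ++ false :: r) =
  nseq k true ++ false :: (if Tr n (alpha ^+ k * b) == 1 then act_a r else r).
Proof.
elim: k b => [|k IH] b /=; first by rewrite expr0 mul1r.
by rewrite IH exprSr mulrA.
Qed.

Definition tb k b := (Tr n (alpha ^+ k * b) == 1).

Lemma germ_to_tb k w b0 b K : Vk k w ->
  gcond n alpha [::] [:: Some b0] [::] [::] [:: Some b] [::] w K -> tb k b0 = tb k b.
Proof.
move=> hV c; have [_ _ h3 _] := gcond_mono (leq_maxl K k.+2) c.
move: h3; rewrite /= !drop0.
have hM := leq_maxr K k.+2.
have -> : maxn K k.+2 = k.+1 + (maxn K k.+2 - k.+2).+1 by move: hM; lia.
rewrite pre_V // /mkseq /= !act_iota_ones.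
move/(congr1 (nth false ^~ k.+1)); rewrite !nth_cat size_nseq ltnNge leqnSn /= subSnn /=.
rewrite /tb; case: ifP; case: ifP => //=; case: (w _) => //.
Qed.

Lemma tb_to_gcond k w b0 b : Vk k w -> tb k b0 = tb k b ->
  gcond n alpha [::] [:: Some b0] [::] [::] [:: Some b] [::] w k.+1.
Proof.
move=> hV ht.
have dropE : forall X : seq bool, drop k.+1 (nseq k true ++ false :: X) = X.
  by move=> X; rewrite -cat1s catA drop_size_cat // size_cat size_nseq addn1.
have preE : pre w k.+1 = nseq k true ++ [:: false] by rewrite -(addn0 k.+1) pre_V.
rewrite /gcond preE.
split => //.
  by rewrite /= !drop0 !act_iota_ones; case: ifP; case: ifP.
move=> u; rewrite /restr /= !drop0 -catA /= !act_iota_ones size_cat size_nseq addn1 !dropE.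
by move: ht; rewrite /tb; case: ifP; case: ifP.
Qed.

Lemma U_iota_char m k b0 b x : (m <= k)%N ->
  Theta n alpha [::] [:: Some b0] [::] (Vk k) x ->
  (U_iota n alpha m b x <-> tb k b = tb k b0).
Proof.
move=> mk [w0 [hV _ hx]]; split.
  move=> [w' [_ _ hx']].
  have /germ_eqE [_ [K c]] := germ_trans (germ_sym hx) hx'.
  by rewrite (germ_to_tb hV c).
move=> ht; exists w0; split => //.
  by move=> i im; rewrite hV ?(leq_trans (ltnW im)) // (leq_trans im).
apply: (germ_trans hx); apply/germ_eqE; split => //.
by exists k.+1; apply: tb_to_gcond.
Qed.

Lemma fsum_char (K : fieldType) (c : F -> K) m k b0 x : (m <= k)%N ->
  Theta n alpha [::] [:: Some b0] [::] (Vk k) x ->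
  fsum n alpha c m x = \sum_(b | tb k b == tb k b0) c b.
Proof.
move=> mk hT; rewrite /fsum [RHS]big_mkcond; apply: eq_bigr => b _.
have key := U_iota_char b mk hT.
case: (boolP (tb k b == tb k b0)) => /eqP h.
  by rewrite asboolT ?mulr1 //; apply/key.
by rewrite asboolF ?mulr0 // => /key.
Qed.

End Ones.

Section Trace.
Variables (n : nat) (F : finFieldType) (cardF : #|F| = (2 ^ n)%N)
  (charF : (2 \in [pchar F])%N).

Lemma frob_pow (x y : F) i : (x + y) ^+ (2 ^ i) = x ^+ (2 ^ i) + y ^+ (2 ^ i).
Proof. by rewrite exprDn_pchar // pnatX pnatE //= charF. Qed.

Lemma TrD (x y : F) : Tr n (x + y) = Tr n x + Tr n y.
Proof. by rewrite /Tr -big_split; apply: eq_bigr => i _; rewrite frob_pow. Qed.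

Lemma Tr0 : Tr n (0 : F) = 0.
Proof. by rewrite /Tr big1 // => i _; rewrite expr0n expn_eq0. Qed.

Lemma TrB (x y : F) : Tr n (x - y) = Tr n x - Tr n y.
Proof. by apply/eqP; rewrite eq_sym subr_eq -TrD subrK. Qed.

Lemma Tr01 (x : F) : Tr n x = 0 \/ Tr n x = 1.
Proof.
have sq : Tr n x ^+ 2 = Tr n x.
  rewrite /Tr (big_morph (fun z : F => z ^+ 2) (fun a b => frob_pow a b 1) (expr0n _ _)).
  under eq_bigr => i _ do rewrite -exprM -expnSr.
  case: n cardF => [|n'] cF.
    by rewrite !big_ord0.
  rewrite big_ord_recr big_ord_recl /= -cF expf_card expn0 expr1 addrC.
  by congr (_ + _); apply: eq_bigr => i _.
have : Tr n x * (Tr n x - 1) = 0 by rewrite mulrBr mulr1 -expr2 sq subrr.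
by move/eqP; rewrite mulf_eq0 subr_eq0 => /orP [/eqP|/eqP]; [left|right].
Qed.

End Trace.

Lemma Tr_nonzero (n : nat) (F : finFieldType) (cardF : #|F| = (2 ^ n)%N) :
  (1 <= n)%N -> exists y : F, Tr n y != 0.
Proof.
case: n cardF => [|n'] cardF // _.
case: (pickP (fun y : F => Tr n'.+1 y != 0)) => [y hy | h]; first by exists y.
pose P : {poly F} := \sum_(i < n'.+1) 'X^(2 ^ i).
have hP y : P.[y] = Tr n'.+1 y.
  by rewrite /P horner_sum; apply: eq_bigr => i _; rewrite hornerXn.
have P0 : P = 0.
  apply: (@roots_geq_poly_eq0 _ P (enum F)).
  - by apply/allP => y _; rewrite /root hP; move: (h y) => /= /negbFE.
  - exact: enum_uniq.
  rewrite -cardE cardF; apply: leq_trans (size_sum _ _ _) _.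
  apply/bigmax_leqP => i _; rewrite size_polyXn ltn_exp2l //.
have : P`_(2 ^ n') = 1.
  rewrite /P coef_sum (bigD1 ord_max) //= coefXn eqxx big1 ?addr0 //.
  move=> i hi; rewrite coefXn eqn_exp2l // eq_sym.
  by move: hi; rewrite -val_eqE /= => /negPf ->.
by rewrite P0 coef0 => /eqP; rewrite eq_sym oner_eq0.
Qed.

Lemma pow_prim (n : nat) (F : finFieldType) (cardF : #|F| = (2 ^ n)%N)
  (alpha : F) (prim : (2 ^ n).-1.-primitive_root alpha) (m : nat) (g : F) :
  g != 0 -> exists k, (m <= k)%N /\ alpha ^+ k = g.
Proof.
move=> gn0.
have hg : g ^+ (2 ^ n).-1 = 1.
  apply: (mulIf gn0); rewrite mul1r -exprSr prednK ?expn_gt0 //.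
  by rewrite -cardF expf_card.
have [i hi] := prim_rootP prim hg.
have hpos : (0 < (2 ^ n).-1)%N by exact: prim_order_gt0 prim.
exists (i + (2 ^ n).-1 * m)%N; split.
  by rewrite (leq_trans _ (leq_addl _ _)) // leq_pmull.
by rewrite exprD exprM (prim_expr_order prim) expr1n mulr1 hi.
Qed.

Section Count.
Variables (K : fieldType) (charK0 : [pchar K] =i pred0)
  (n : nat) (hn : (1 <= n)%N)
  (F : finFieldType) (cardF : #|F| = (2 ^ n)%N) (charF : (2 \in [pchar F])%N).

Lemma cls (x y : F) : ((Tr n x == 1) == (Tr n y == 1)) = (Tr n (x - y) == 0).
Proof.
rewrite (TrB n charF).
have o1 : (1 : F) != 0 := oner_neq0 F.
case: (Tr01 cardF charF x) => ->; case: (Tr01 cardF charF y) => ->;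
  rewrite ?subrr ?eqxx ?subr0 ?sub0r ?oppr_eq0.
all: by rewrite ?(eq_sym 0) ?(negPf o1).
Qed.

Definition cnt (d : F) : K := \sum_(g | (g != 0) && (Tr n (g * d) == 0)) 1.
Definition Mk : K := \sum_(g : F | (g != 0) && (Tr n g == 0)) 1.
Definition Pk : K := \sum_(g : F | Tr n g != 0) 1.

Lemma cnt0 : cnt 0 = Mk + Pk.
Proof.
rewrite /cnt /Mk /Pk.
under eq_bigl => g do rewrite mulr0 Tr0 eqxx andbT.
rewrite (bigID (fun g => Tr n g == 0)) /=; congr (_ + _).
apply: congr_big => // g; case: (eqVneq g 0) => [->|] /=; first by rewrite Tr0 eqxx.
by [].
Qed.

Lemma cntd d : d != 0 -> cnt d = Mk.
Proof.
move=> dn0; rewrite /Mk (reindex_inj (mulIf dn0)) /cnt; apply: eq_bigl => g /=.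
by rewrite mulf_eq0 (negPf dn0) orbF.
Qed.

Lemma count_zero (c : F -> K) :
  (forall g : F, g != 0 -> forall b,
     \sum_(x | (Tr n (g * x) == 1) == (Tr n (g * b) == 1)) c x = 0) ->
  forall b, c b = 0.
Proof.
move=> H.
set S := \sum_x c x.
have stepA : forall b, Pk * c b + Mk * S = 0.
  move=> b.
  have E : \sum_(g : F) \sum_(x : F) (if g != 0 then
        (if Tr n (g * (x - b)) == 0 then c x else 0) else 0) = 0.
    apply: big1 => g _; case: (eqVneq g 0) => [->|gn0] /=; first by rewrite big1.
    rewrite -big_mkcond /= -[RHS](H g gn0 b); apply: eq_bigl => x.
    by rewrite cls mulrBr.
  rewrite -E exchange_big /=.
  have E2 : forall x, \sum_(g : F) (if g != 0 then
        (if Tr n (g * (x - b)) == 0 then c x else 0) else 0) = c x * cnt (x - b).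
    move=> x; rewrite /cnt [in RHS]big_mkcond mulr_sumr; apply: eq_bigr => g _.
    by case: (g != 0); case: (Tr n _ == 0); rewrite /= ?mulr1 ?mulr0.
  under eq_bigr => x _ do rewrite E2.
  rewrite (bigD1 b) //= subrr cnt0 /S (bigD1 b) //=.
  under [X in _ = _ + X]eq_bigr => x hx do rewrite cntd ?subr_eq0 //.
  rewrite -mulr_suml; ring.
have natP : exists p, Pk = p.+1%:R.
  have [y hy] := Tr_nonzero cardF hn.
  rewrite /Pk (bigD1 y) //=.
  exists (\sum_(i : F | (Tr n i != 0) && (i != y)) 1%N); rewrite -nat1r natr_sum.
  by congr (_ + _); apply: eq_bigr => i _; rewrite mulr1n.
have natM : exists m, Mk = m%:R.
  exists (\sum_(g : F | (g != 0) && (Tr n g == 0)) 1%N); rewrite /Mk natr_sum.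
  by apply: eq_bigr => i _; rewrite mulr1n.
have [p hp] := natP; have [m hm] := natM.
have nz : forall N, N%:R != 0 :> K -> True by [].
have S0 : S = 0.
  have : \sum_b (Pk * c b + Mk * S) = 0 by apply: big1 => b _; exact: stepA.
  rewrite big_split /= -mulr_sumr sumr_const -/S => /eqP.
  rewrite -mulr_natr mulrAC -mulrDl mulf_eq0 => /orP [|/eqP //].
  rewrite hp hm -natrM -natrD (proj1 (pcharf0P K) charK0) => /eqP.
  by rewrite addSn.
move=> b; have := stepA b; rewrite S0 mulr0 addr0 => /eqP.
rewrite mulf_eq0 hp (proj1 (pcharf0P K) charK0) => /orP [//|/eqP //].
Qed.

End Count.

Theorem mainTheorem6 (K : fieldType) (charK0 : [pchar K] =i pred0)
  (n : nat) (hn : (2 <= n)%N)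
  (F : finFieldType) (cardF : #|F| = (2 ^ n)%N) (charF : (2 \in [pchar F])%N)
  (alpha : F) (prim : (2 ^ n).-1.-primitive_root alpha)
  (c : F -> K) (m : nat) :
  singular n alpha (fsum n alpha c m) <->
  (forall x, valid x -> fsum n alpha c m x = 0).
Proof.
split.
- move=> hs.
  have hn1 : (1 <= n)%N by exact: ltnW.
  have c0 : forall b, c b = 0.
    apply: (count_zero charK0 hn1 cardF charF) => g gn0 b.
    have [k [mk hk]] := pow_prim cardF prim m gn0.
    case: (eqVneq (\sum_(x | (Tr n (g * x) == 1) == (Tr n (g * b) == 1)) c x) 0) => // hS.
    exfalso.
    pose A : gset F := fun x => valid x /\ Theta n alpha [::] [:: Some b] [::] (Vk k) x.
    pose w0 := fun i => (i < k)%N.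
    apply: (hs A _ _ ([::], [:: Some b], [::], w0)).
    + split.
      * move=> x y _ vy hxy [_ [w [hV hc hx]]]; split => //; exists w; split => //.
        exact: germ_trans (germ_sym hxy) hx.
      * move=> x vx [_ hT]; exists [::], [:: Some b], [::], (Vk k); split => //.
        - move=> w hV; exists k.+1 => w' hw' i hi.
          by rewrite hw' ?ltnS // hV.
    + move=> x vx [_ hT]; split => //.
      by rewrite (fsum_char c mk hT) /tb hk.
    + by move=> i.
    + split; first by move=> i.
      by exists w0; split => //; exact: germ_refl.
  move=> x _; rewrite /fsum big1 // => b _; by rewrite c0 mul0r.
- move=> h0 A _ hA x vx Ax; have [_] := hA x vx Ax.
  by rewrite h0 // eqxx.
Qed.
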